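(* Let $y_0\approx1.35542$ be the second smallest real root of the polynomial $2y^3-9y^2+10y-2$ (its unique root in the interval $(1,2)$). Algorithm SIDLE with parameter $y=y_0$ is $\rho$-competitive for $1\mid t_j=1\mid\sum C_j$ with obligatory tests, regardless of the order in which it tests the jobs, where \[ \rho=\tfrac12\left(1-y_0+y_0^2+\sqrt{9-2y_0-y_0^2-2y_0^3+y_0^4}\right)\approx1.58451\le1.585. \]
   Context: Scheduling with obligatory tests and uniform test times: $n$ jobs on a single machine, each with test time $t_j=1$ and an unknown processing time $p_j\ge0$ revealed only when the test of $j$ completes. The test of a job must be executed before its processing part (which can be executed any time afterwards); operations are non-preemptive, one at a time. $C_j$ is the completion time of the processing part of $j$; objective $\sum_jC_j$. An algorithm is $\rho$-competitive if $\mathit{ALG}\le\rho\cdot\mathit{OPT}$ on every instance, where $\mathit{OPT}$ is the offline optimum (tests also obligatory). Algorithm SIDLE with parameter $y>0$: test the jobs one after another without idle time (in some order). When the test of job $j$ completes and reveals $p_j\le y$ (a short job), execute the processing part of $j$ immediately after its test, before the next test. If $p_j>y$ (a long job), defer its processing part. After all jobs have been tested and all short jobs executed, execute the processing parts of the long jobs in non-decreasing order of $p_j$. *)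

(* Defs.v *)
From mathcomp Require Import all_boot all_order all_algebra all_fingroup.
Set Implicit Arguments. Unset Strict Implicit. Unset Printing Implicit Defensive.
Import Order.TTheory GRing.Theory Num.Theory.
Local Open Scope ring_scope.

Section Sched.
Variable R : rcfType.

(* Phase 1: test the jobs in the given order (list of processing times in
   testing order), starting at time [t]; a short job (p <= y) is processed
   right after its test. *)
Fixpoint sidle_phase1 (y t : R) (s : seq R) : R * R :=
  match s with
  | [::] => (t, 0)
  | p :: s' =>
      if p <= y then
        let r := sidle_phase1 y (t + 1 + p) s' in (r.1, r.2 + (t + 1 + p))
      else sidle_phase1 y (t + 1) s'
  end.

Fixpoint seq_completion (t : R) (s : seq R) : R :=
  match s with
  | [::] => 0
  | p :: s' => (t + p) + seq_completion (t + p) s'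
  end.

Definition sidle_cost (y : R) (s : seq R) : R :=
  let r := sidle_phase1 y 0 s in
  r.2 + seq_completion r.1 (sort <=%R [seq p <- s | y < p]).

(* A (non-preemptive, single-machine) schedule gives start times [ts j] of
   the test (length 1) and [ps j] of the processing part (length p j). *)
Definition feasible_schedule n (p : 'I_n -> R) (ts ps : 'I_n -> R) : Prop :=
  [/\ (forall j, 0 <= ts j),
      (forall j, ts j + 1 <= ps j),
      (forall i j, i != j -> ts i + 1 <= ts j \/ ts j + 1 <= ts i),
      (forall i j, i != j -> ps i + p i <= ps j \/ ps j + p j <= ps i)
    & (forall i j, ts i + 1 <= ps j \/ ps j + p j <= ts i)].

Definition schedule_cost n (p : 'I_n -> R) (ps : 'I_n -> R) : R :=
  \sum_(j < n) (ps j + p j).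

Definition test_order n (p : 'I_n -> R) (sigma : {perm 'I_n}) : seq R :=
  [seq p (sigma k) | k <- enum 'I_n].

End Sched.

(* Main.v *)
Require Import Defs.
From mathcomp Require Import all_boot all_order all_algebra all_fingroup.
From mathcomp Require Import ring lra zify.
Import Order.TTheory GRing.Theory Num.Theory.
Local Open Scope ring_scope.

Set Implicit Arguments. Unset Strict Implicit.

Section Pairs.
Variable (R : rcfType) (T : eqType).

Fixpoint pairs (f : T -> T -> R) (s : seq T) : R :=
  match s with [::] => 0 | x :: s' => \sum_(z <- s') f x z + pairs f s' end.

Lemma pairsE f (fsym : forall a b, f a b = f b a) s :
  pairs f s = (\sum_(x <- s) \sum_(z <- s) f x z - \sum_(x <- s) f x x) / 2.
Proof.
elim: s => [|x s IH] /=; first by rewrite !big_nil; field.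
rewrite IH.
have -> : \sum_(i <- x :: s) \sum_(z <- x :: s) f i z =
   f x x + \sum_(z <- s) f x z + (\sum_(i <- s) f x i + \sum_(i <- s) \sum_(z <- s) f i z).
  rewrite big_cons big_cons; congr (_ + _).
  by rewrite -big_split /=; apply: eq_bigr => i _; rewrite big_cons fsym.
rewrite big_cons.
by field.
Qed.

Lemma pairs_perm f (fsym : forall a b, f a b = f b a) s1 s2 :
  perm_eq s1 s2 -> pairs f s1 = pairs f s2.
Proof.
move=> h; rewrite !pairsE //; rewrite (perm_big _ h).
by congr ((_ - _) / 2); [apply: eq_bigr => i _; apply: perm_big | apply: perm_big].
Qed.

Lemma pairs_lin (c : R) f g s :
  pairs (fun a b => c * f a b - g a b) s = c * pairs f s - pairs g s.
Proof.
elim: s => [|x s IH] /=; first by rewrite mulr0 subr0.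
rewrite IH big_split /= -mulr_sumr sumrN; ring.
Qed.

End Pairs.

Set Implicit Arguments. Unset Strict Implicit.

Section Sidle.
Variable (R : rcfType) (y : R).

Definition mnr (a b : R) := if a <= b then a else b.
Definition mxr (a b : R) := if a <= b then b else a.

Lemma mnrC a b : mnr a b = mnr b a.
Proof. rewrite /mnr; case: (leP a b); case: (leP b a) => //; lra. Qed.
Lemma mxrC a b : mxr a b = mxr b a.
Proof. rewrite /mxr; case: (leP a b); case: (leP b a) => //; lra. Qed.

Lemma phase1E (s : seq R) : forall t : R,
  (sidle_phase1 y t s).1 = t + \sum_(z <- s) (1 + (if z <= y then z else 0)) /\
  (sidle_phase1 y t s).2 = (count (fun z => z <= y) s)%:R * t + (sidle_phase1 y 0 s).2.
Proof.
elim: s => [|x s IH] t /=; first by rewrite big_nil mul0r add0r addr0.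
rewrite big_cons; case: ifP => hx /=.
- have [h1 h2] := IH (t + 1 + x); have [h3 h4] := IH (0 + 1 + x).
  split; first by rewrite h1; ring.
  rewrite h2 h4 natrD; ring.
- have [h1 h2] := IH (t + 1); have [h3 h4] := IH (0 + 1).
  split; first by rewrite h1; ring.
  rewrite h2 h4; ring.
Qed.

Lemma scE (q : seq R) : forall T : R, seq_completion T q = (size q)%:R * T + seq_completion 0 q.
Proof.
elim: q => [|x q IH] T /=; first by rewrite mul0r addr0.
rewrite IH (IH (0 + x)) -addn1 natrD; ring.
Qed.

Lemma sum_mnr_le (x : R) q : all (fun z => x <= z) q ->
  \sum_(z <- q) mnr x z = (size q)%:R * x.
Proof.
elim: q => [|z q IH] /=; first by rewrite big_nil mul0r.
move=> /andP [hz hq]; rewrite big_cons IH // /mnr hz -addn1 natrD; ring.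
Qed.

Lemma sc_sorted (q : seq R) : sorted <=%R q ->
  seq_completion 0 q = \sum_(z <- q) z + pairs mnr q.
Proof.
elim: q => [|x q IH] /=; first by rewrite big_nil addr0.
move=> hp; have hs := path_sorted hp.
have ha : all (fun z => x <= z) q by apply: (order_path_min le_trans hp).
rewrite scE IH // big_cons sum_mnr_le //; ring.
Qed.

Definition longs (s : seq R) := [seq p <- s | y < p].
Definition P1 (s : seq R) := \sum_(z <- s) (1 + (if z <= y then z else 0)).
Definition P2 (s : seq R) := (sidle_phase1 y 0 s).2.
Definition Aval (s : seq R) :=
  P2 s + (size (longs s))%:R * P1 s + \sum_(l <- longs s) l + pairs mnr (longs s).

Lemma sidle_Aval (s : seq R) : sidle_cost y s = Aval s.
Proof.
rewrite /sidle_cost /Aval.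
have [h1 _] := phase1E s 0.
rewrite h1 add0r scE sc_sorted; last by apply: sort_sorted; exact: le_total.
rewrite size_sort (perm_big _ (permEl (perm_sort _ _))) (pairs_perm mnrC (permEl (perm_sort _ _))).
by rewrite /P2 /P1 /longs !addrA.
Qed.

Definition Kt (a b : R * bool) : R :=
  match a.2, b.2 with
  | false, false => 1 + mxr a.1 b.1
  | true, false => 2 + b.1
  | false, true => 2 + a.1
  | true, true => 2 + mnr a.1 b.1
  end.

Lemma KtC a b : Kt a b = Kt b a.
Proof.
by case: a => [a [|]]; case: b => [b [|]]; rewrite /Kt /= ?(mnrC a b) ?(mxrC a b).
Qed.

Definition UB (t : seq (R * bool)) := \sum_(z <- t) (1 + z.1) + pairs Kt t.
Definition tl (s : seq R) := [seq (v, y < v) | v <- s].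

Lemma sum_const_seq (c : R) (s : seq R) : \sum_(z <- s) c = (size s)%:R * c.
Proof.
elim: s => [|x s IH]; first by rewrite big_nil mul0r.
by rewrite big_cons IH /= -addn1 natrD; ring.
Qed.

Lemma count_split (s : seq R) :
  (count (fun z => z <= y) s)%:R + (size (longs s))%:R = (size s)%:R :> R.
Proof.
rewrite -natrD /longs size_filter; congr (_%:R).
rewrite -(count_predC (fun z => z <= y) s); congr (_ + _)%N.
by apply: eq_count => z /=; rewrite ltNge.
Qed.

Lemma Aval_UB (s : seq R) : Aval s <= UB (tl s).
Proof.
elim: s => [|x s IH].
  by rewrite /Aval /UB /P2 /P1 /longs /= !big_nil mul0r !addr0.
have hc := count_split s.
move: IH; rewrite /Aval /UB /P2 /P1 /tl /= !big_cons /=.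
rewrite !big_map.
have [_ h2] := phase1E s (0 + 1 + x); have [_ h2'] := phase1E s (0 + 1).
case: (leP x y) => hx /=.
- rewrite h2 => IH.
  have hK : (size s)%:R * (1 + x) <= \sum_(z <- s) Kt (x, false) (z, y < z).
    rewrite -sum_const_seq; apply: ler_sum => z _; rewrite /Kt /=.
    case: (y < z); first lra.
    rewrite /mxr; case: (leP x z) => ?; lra.
  rewrite -hc in hK.
  move: IH hK.
  set P := (sidle_phase1 y 0 s).2.
  set L := (size (longs s))%:R.
  set Q := \sum_(i <- s) (1 + (if i <= y then i else 0)).
  set cs := (count _ s)%:R.
  move=> IH hK; nra.
- rewrite h2' big_cons -addn1 natrD => IH.
  have hK : (size s)%:R + \sum_(i <- s) (1 + (if i <= y then i else 0)) +
            \sum_(l <- longs s) mnr x l = \sum_(z <- s) Kt (x, true) (z, y < z).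
    rewrite /longs big_filter [X in _ + X = _]big_mkcond -[(size s)%:R]mulr1 -sum_const_seq -!big_split /=.
    apply: eq_bigr => z _; rewrite /Kt /=.
    case: (leP z y) => hz; ring.
  rewrite -hc in hK.
  move: IH hK.
  set P := (sidle_phase1 y 0 s).2.
  set L := (size (longs s))%:R.
  set Q := \sum_(i <- s) (1 + (if i <= y then i else 0)).
  set cs := (count _ s)%:R.
  move=> IH hK; nra.
Qed.

End Sidle.

Set Implicit Arguments. Unset Strict Implicit.

Section Dsec.
Variable (R : rcfType) (y rho : R).
Hypothesis (hy : 0 < y) (hrho : 1 <= rho).

Definition Lk (a b : R * bool) : R := 1 + mnr a.1 b.1.
Definition gk (a b : R * bool) : R := rho * Lk a b - Kt a b.
Definition Dv (t : seq (R * bool)) : R :=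
  \sum_(z <- t) (rho - 1) * (1 + z.1) + pairs gk t.
Definition LBt (t : seq (R * bool)) := \sum_(z <- t) (1 + z.1) + pairs Lk t.

Lemma gkC a b : gk a b = gk b a.
Proof. by rewrite /gk /Lk KtC mnrC. Qed.

Lemma Dv_LB t : Dv t = rho * LBt t - UB t.
Proof.
rewrite /Dv /LBt /UB /gk pairs_lin mulrDr mulr_sumr.
have -> : \sum_(z <- t) (rho - 1) * (1 + z.1) =
   \sum_(z <- t) rho * (1 + z.1) - \sum_(z <- t) (1 + z.1).
  by rewrite -sumrB; apply: eq_bigr => z _; ring.
ring.
Qed.

Lemma Dv_cons x t : Dv (x :: t) = Dv t + ((rho - 1) * (1 + x.1) + \sum_(z <- t) gk x z).
Proof. rewrite /Dv big_cons /=; ring. Qed.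

Lemma Dv_perm t1 t2 : perm_eq t1 t2 -> Dv t1 = Dv t2.
Proof. by move=> h; rewrite /Dv (perm_big _ h) (pairs_perm gkC h). Qed.

Definition valid (z : R * bool) :=
  (0 <= z.1) && (if z.2 then y <= z.1 else z.1 <= y).
Definition canon (z : R * bool) :=
  if z.2 then z.1 == y else (z.1 == 0) || (z.1 == y).

Lemma gk_short (l : R) z : 0 <= l <= 1 -> valid z ->
  (1 - l) * gk (0, false) z + l * gk (y, false) z <= gk (l * y, false) z.
Proof.
have hy0 := hy; have hr0 := hrho.
case: z => w b /andP [hl0 hl1] /andP [/= hw hb].
have hly : l * y <= y by nra.
have hly0 : 0 <= l * y by nra.
have A1 : 0 <= l * (rho + 1) by nra.
have A2 : 0 <= (1 - l) * (rho + 1) by nra.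
have A3 : 0 <= l * (rho - 1) by nra.
have A4 : 0 <= (1 - l) * (rho - 1) by nra.
rewrite /gk /Lk /Kt /mnr /mxr /=.
case: b hb => hb.
- case: (leP 0 w) => h1; case: (leP y w) => h2; case: (leP (l * y) w) => h3; nra.
- case: (leP 0 w) => h1; case: (leP y w) => h2; case: (leP (l * y) w) => h3; nra.
Qed.

Lemma gk_long (v : R) z : y <= v -> valid z -> gk (y, true) z <= gk (v, true) z.
Proof.
have hy0 := hy; have hr0 := hrho.
case: z => w b hv /andP [/= hw hb].
rewrite /gk /Lk /Kt /mnr /mxr /=.
case: b hb => hb.
- case: (leP y w) => h2; case: (leP v w) => h3; nra.
- case: (leP y w) => h2; case: (leP v w) => h3; nra.
Qed.

Definition Hh (x : R * bool) (t : seq (R * bool)) :=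
  (rho - 1) * (1 + x.1) + \sum_(z <- t) gk x z.

Lemma Hh_short (l : R) t : 0 <= l <= 1 -> all valid t ->
  (1 - l) * Hh (0, false) t + l * Hh (y, false) t <= Hh (l * y, false) t.
Proof.
move=> hl /allP ht; rewrite /Hh /= !mulrDr !mulr_sumr.
have -> : forall a b c d : R, a + b + (c + d) = (a + c) + (b + d) by move=> *; ring.
apply: lerD; first by rewrite le_eqVlt; apply/orP; left; apply/eqP; ring.
rewrite -big_split /= big_seq [X in _ <= X]big_seq; apply: ler_sum => z hz.
exact: gk_short hl (ht z hz).
Qed.

Lemma Hh_long (v : R) t : y <= v -> all valid t ->
  Hh (y, true) t <= Hh (v, true) t.
Proof.
have hy0 := hy; have hr0 := hrho.
move=> hv /allP ht; rewrite /Hh /=; apply: lerD; first by nra.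
rewrite big_seq [X in _ <= X]big_seq; apply: ler_sum => z hz.
exact: gk_long hv (ht z hz).
Qed.

Lemma canon_valid z : canon z -> valid z.
Proof.
have hy0 := hy.
case: z => w [|] /=; rewrite /canon /valid /=.
  by move=> /eqP ->; rewrite lexx andbT ltW.
by case/orP => /eqP ->; rewrite ?lexx ?ltW.
Qed.

Lemma Dv_main s : forall r, all canon r -> all valid s ->
  (forall r', all canon r' -> 0 <= Dv r') -> 0 <= Dv (r ++ s).
Proof.
have hy0 := hy; have hr0 := hrho.
elim: s => [|x s IH] r hr hs hbase; first by rewrite cats0; exact: hbase.
move: hs => /= /andP [hx hs].
have hp : forall c, Dv (r ++ c :: s) = Dv (c :: (r ++ s)).
  by move=> c; apply: Dv_perm; rewrite (perm_catCA r [:: c] s).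
have hIH : forall c, canon c -> 0 <= Dv (c :: (r ++ s)).
  move=> c hc; rewrite -hp -cat_rcons; apply: IH => //.
  by rewrite -cats1 all_cat hr /= hc.
have hv : all valid (r ++ s).
  rewrite all_cat hs andbT; apply/allP => z hz; apply: canon_valid.
  exact: (allP hr).
rewrite hp Dv_cons.
move: hx; case: x => v [|] /andP [/= hv0 hvb].
- have h := Hh_long hvb hv.
  have h2 := hIH (y, true) (eqxx _).
  move: h2; rewrite Dv_cons /Hh /= in h *; rewrite /=; move=> h2; lra.
- set l := v / y.
  have hvl : v = l * y by rewrite /l divfK // gt_eqF.
  have hl : 0 <= l <= 1.
    apply/andP; split; [apply: divr_ge0 => //; exact: ltW | by rewrite ler_pdivrMr // mul1r].
  have h := Hh_short hl hv.
  have hc0 : canon (0, false) by rewrite /canon /= eqxx.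
  have hc1 : canon (y, false) by rewrite /canon /= eqxx orbT.
  have h0 := hIH _ hc0; have h1 := hIH _ hc1.
  move: h0 h1; rewrite !Dv_cons /Hh /= in h *; rewrite hvl.
  move: hl => /andP [hl0 hl1] h0 h1.
  set S0 := \sum_(z <- r ++ s) gk (0, false) z in h h0.
  set Sy := \sum_(z <- r ++ s) gk (y, false) z in h h1.
  set D0 := Dv (r ++ s) in h0 h1 *.
  nra.
Qed.

End Dsec.

Set Implicit Arguments. Unset Strict Implicit.

Section Canon.
Variable (R : rcfType) (y rho : R).
Hypothesis (hy : 0 < y).

Definition ca (r : seq (R * bool)) := (count (fun z => ~~ z.2 && (z.1 == 0)) r)%:R : R.
Definition cb (r : seq (R * bool)) := (count (fun z => ~~ z.2 && (z.1 != 0)) r)%:R : R.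
Definition cc (r : seq (R * bool)) := (count (fun z => z.2) r)%:R : R.

Lemma sum_canon (F : R * bool -> R) r : all (canon y) r ->
  \sum_(z <- r) F z = ca r * F (0, false) + cb r * F (y, false) + cc r * F (y, true).
Proof.
have hy0 : y != 0 by rewrite gt_eqF.
elim: r => [|[w b] r IH] /=; first by rewrite big_nil /ca /cb /cc /= !mul0r !addr0.
move=> /andP [hz hr]; rewrite big_cons IH // /ca /cb /cc /=.
move: hz; rewrite /canon /=; case: b => /=.
  move=> /eqP ->.
  rewrite !add0n -addn1 natrD; ring.
case/orP => /eqP ->; rewrite ?eqxx ?(negbTE hy0) /= !natrD; ring.
Qed.

Definition C2 (m : R) := m * (m - 1) / 2.
Definition Phi (a b c : R) :=
  (rho - 1) * (a + b + c + y * (b + c)) + rho * (C2 (a + b + c) + y * C2 (b + c))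
  - (C2 (a + b) * (1 + y) - y * C2 a + 2 * c * (a + b) + y * c * b + (2 + y) * C2 c).

Lemma Dv_canon r : all (canon y) r -> Dv rho r = Phi (ca r) (cb r) (cc r).
Proof.
have hy0 : y != 0 by rewrite gt_eqF.
have hyle : (y <= 0) = false by rewrite leNgt hy.
have h0y : 0 <= y by apply: ltW.
elim: r => [|[w b] r IH] /=.
  by rewrite /Dv /Phi /ca /cb /cc /C2 /= big_nil => _; by field.
move=> /andP [hz hr]; rewrite Dv_cons IH // (sum_canon _ hr) /ca /cb /cc /=.
move: hz; rewrite /canon /=.
case: b => /=.
  move=> /eqP ->; rewrite !natrD.
  rewrite /gk /Lk /Kt /mnr /mxr /= ?lexx ?hyle ?h0y /Phi /C2; by field.
case/orP => /eqP ->; rewrite ?eqxx ?(negbTE hy0) /= !natrD.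
  rewrite /gk /Lk /Kt /mnr /mxr /= ?lexx ?hyle ?h0y /Phi /C2; by field.
rewrite /gk /Lk /Kt /mnr /mxr /= ?lexx ?hyle ?h0y /Phi /C2; by field.
Qed.

End Canon.

Set Implicit Arguments. Unset Strict Implicit.

Lemma Phi_ge0 (R : rcfType) (y rho a b c : R) :
  0 < y -> 1 < rho ->
  rho ^+ 2 - (1 - y + y ^+ 2) * rho + y ^+ 2 - 2 = 0 ->
  0 < (rho - 1) ^+ 2 * (1 + y) - (rho - 1 - y) ^+ 2 ->
  0 <= rho * (1 + y) - y ->
  0 <= a -> 0 <= b -> 0 <= c -> 0 <= Phi y rho a b c.
Proof.
move=> hy hr hq hd2 hl ha hb hc.
set M00 := rho - 1. set M01 := rho - 1 - y. set M02 := rho - 2.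
set M11 := (rho - 1) * (1 + y). set M12 := rho * (1 + y) - 2 - y. set M22 := M12.
set Q := M00 * a ^+ 2 + M11 * b ^+ 2 + M22 * c ^+ 2 + 2 * M01 * a * b
   + 2 * M02 * a * c + 2 * M12 * b * c.
have E : 2 * Phi y rho a b c =
   Q + (rho - 1) * a + (rho - 1) * (1 + y) * b + (rho * (1 + y) - y) * c.
  rewrite /Phi /C2 /Q /M22 /M00 /M01 /M02 /M11 /M12; by field.
set d2 := (rho - 1) ^+ 2 * (1 + y) - (rho - 1 - y) ^+ 2 in hd2.
set e := M00 * M12 - M01 * M02.
set qq := rho ^+ 2 - (1 - y + y ^+ 2) * rho + y ^+ 2 - 2 in hq.
have S : M00 * d2 * Q = d2 * (M00 * a + M01 * b + M02 * c) ^+ 2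
    + (d2 * b + e * c) ^+ 2 + M00 * (y * qq) * c ^+ 2.
  rewrite /Q /d2 /e /qq /M22 /M00 /M01 /M02 /M11 /M12; ring.
rewrite hq !(mulr0, mul0r) addr0 in S.
have hQ : 0 <= Q.
  have h1 : 0 < M00 * d2 by rewrite /M00; apply: mulr_gt0 => //; lra.
  have h2 : 0 <= M00 * d2 * Q.
    rewrite S; apply: addr_ge0; [apply: mulr_ge0; [lra| exact: sqr_ge0] | exact: sqr_ge0].
  by rewrite -(pmulr_rge0 _ h1).
have hL : 0 <= (rho - 1) * a + (rho - 1) * (1 + y) * b + (rho * (1 + y) - y) * c.
  have : 0 <= (rho - 1) * (1 + y) by apply: mulr_ge0; lra.
  nra.
lra.
Qed.

Set Implicit Arguments. Unset Strict Implicit.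

Lemma y_lo (R : rcfType) (y : R) : 1 < y < 2 ->
  2 * y ^+ 3 - 9 * y ^+ 2 + 10 * y - 2 = 0 -> 1355 / 1000 <= y.
Proof.
move=> /andP [h1 h2] hf; case: (leP (1355 / 1000) y) => // hc.
have a1 : 0 <= (y - 1355/1000) ^+ 2 * (y - 1) by apply: mulr_ge0; [exact: sqr_ge0| lra].
have a2 : 0 < (1355/1000 - y) * (158/100 * y + 1) by apply: mulr_gt0; lra.
nra.
Qed.

Lemma y_hi (R : rcfType) (y : R) : 1 < y < 2 ->
  2 * y ^+ 3 - 9 * y ^+ 2 + 10 * y - 2 = 0 -> y <= 1356 / 1000.
Proof.
move=> /andP [h1 h2] hf; case: (leP y (1356 / 1000)) => // hc.
have a1 : 0 <= (y - 1356/1000) ^+ 2 * (2 - y) by apply: mulr_ge0; [exact: sqr_ge0| lra].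
have a2 : 0 < (y - 1356/1000) * (y + 1) by apply: mulr_gt0; lra.
nra.
Qed.

Lemma rho_facts (R : rcfType) (y : R) : 1355 / 1000 <= y <= 1356 / 1000 ->
  let s := Num.sqrt (9 - 2 * y - y ^+ 2 - 2 * y ^+ 3 + y ^+ 4) in
  let rho := (1 - y + y ^+ 2 + s) / 2 in
  [/\ rho <= 1585%:R / 1000%:R, 158 / 100 <= rho,
      rho ^+ 2 - (1 - y + y ^+ 2) * rho + y ^+ 2 - 2 = 0,
      0 < (rho - 1) ^+ 2 * (1 + y) - (rho - 1 - y) ^+ 2 &
      0 <= rho * (1 + y) - y].
Proof.
move=> /andP [h1 h2] s rho.
pose D := 9 - 2 * y - y ^+ 2 - 2 * y ^+ 3 + y ^+ 4.
have hD : 0 <= D by rewrite /D; nra.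
have hs2 : s ^+ 2 = D by rewrite /s -/D sqr_sqrtr.
have hs0 : 0 <= s by rewrite /s sqrtr_ge0.
have hp : 0 <= (y - 1355/1000) * (1356/1000 - y) by apply: mulr_ge0; lra.
have hu : D <= (317/100 - (1 - y + y ^+ 2)) ^+ 2 by rewrite /D; nra.
have hsl : 168 / 100 <= s.
  have : (168/100) ^+ 2 <= D by rewrite /D; nra.
  nra.
have hsu : s <= 317/100 - (1 - y + y ^+ 2) by nra.
have hr1 : rho <= 1585 / 1000 by rewrite /rho; lra.
have hr2 : 158 / 100 <= rho by rewrite /rho; nra.
split => //.
- rewrite /rho; move: hs2; rewrite /D => hs2; nra.
- nra.
- nra.
Qed.

Set Implicit Arguments. Unset Strict Implicit.

Section LBsec.
Variable R : rcfType.

Lemma intervals_pos (I : finType) (st len : I -> R) :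
  (forall x, 0 <= st x) ->
  (forall x y, x != y -> st x + len x <= st y \/ st y + len y <= st x) ->
  forall (B : {set I}) (C : R),
  (forall x, x \in B -> 0 < len x) -> 0 <= C ->
  (forall x, x \in B -> st x + len x <= C) ->
  \sum_(x in B) len x <= C.
Proof.
move=> hst hdis B; move: {2}#|B| (erefl #|B|) => n; elim: n B => [|n IH] B hn C hpos hC hend.
  move/eqP: hn; rewrite cards_eq0 => /eqP ->; by rewrite big_set0.
have [x0 hx0] : exists x0, x0 \in B.
  apply/set0Pn; rewrite -cards_eq0 hn //.
case: (@arg_maxP _ _ I x0 (mem B) (fun x => st x + len x) hx0) => xm hxm hmax.
rewrite (bigD1 xm) //=.
have -> : \sum_(i in B | i != xm) len i = \sum_(i in B :\ xm) len i.
  by apply: eq_bigl => i; rewrite in_setD1 andbC.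
have hxm' : xm \in B by [].
have hcard : #|B :\ xm| = n by move: hn; rewrite (cardsD1 xm) hxm' add1n => -[].
have hle : \sum_(i in B :\ xm) len i <= st xm.
  apply: IH => //.
  - by move=> x; rewrite in_setD1 => /andP [_ hx]; apply: hpos.
  - move=> x; rewrite in_setD1 => /andP [hne hx].
    case: (hdis x xm hne) => // h.
    have /= := hmax x hx; have := hpos x hx; lra.
have := hend xm hxm; lra.
Qed.

Lemma intervals (I : finType) (st len : I -> R) :
  (forall x, 0 <= st x) -> (forall x, 0 <= len x) ->
  (forall x y, x != y -> st x + len x <= st y \/ st y + len y <= st x) ->
  forall (B : {set I}) (C : R), 0 <= C ->
  (forall x, x \in B -> st x + len x <= C) ->
  \sum_(x in B) len x <= C.
Proof.
move=> hst hlen hdis B C hC hend.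
rewrite (bigID (fun x => 0 < len x)) /=.
rewrite [X in _ + X]big1 ?addr0; last first.
  by move=> x /andP [_ h]; apply/eqP; rewrite eq_le hlen andbT leNgt.
have -> : \sum_(i in B | 0 < len i) len i = \sum_(i in [set x in B | 0 < len x]) len i.
  by apply: eq_bigl => i; rewrite inE.
apply: intervals_pos => //.
- by move=> x; rewrite inE => /andP [].
- by move=> x; rewrite inE => /andP [h _]; apply: hend.
Qed.


Variables (n : nat) (p ts ps : 'I_n -> R).
Hypothesis hp : forall j, 0 <= p j.
Hypothesis hf : feasible_schedule p ts ps.

Definition Cj j := ps j + p j.

Lemma job_total (A : {set 'I_n}) z : z \in A -> (forall j, j \in A -> Cj j <= Cj z) ->
  \sum_(j in A) (1 + p j) <= Cj z.
Proof.
have hp' := hp.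
case: hf => h1 h2 h3 h4 h5 hz hmax.
pose st (x : 'I_n * bool) := if x.2 then ps x.1 else ts x.1.
pose len (x : 'I_n * bool) := if x.2 then p x.1 else 1.
have -> : \sum_(j in A) (1 + p j) = \sum_(x in [set x : 'I_n * bool | x.1 \in A]) len x.
  have -> : \sum_(j in A) (1 + p j) = \sum_(j in A) \sum_(b : bool) len (j, b).
    by apply: eq_bigr => j _; rewrite big_bool /len /= addrC.
  rewrite pair_big /=; apply: eq_big => [[j b]|[j b] _] //=; by rewrite inE andbT.
apply: (@intervals _ st len).
- move=> [j [|]]; rewrite /st /=; last exact: h1.
  by have := h1 j; have := h2 j; lra.
- by move=> [j [|]]; rewrite /len /= ?ler01.
- move=> [i b] [j c] hne; rewrite /st /len /=.
  case: b hne; case: c => hne /=.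
  + have hij : i != j by apply: contraNneq hne => ->.
    exact: h4.
  + by case: (h5 j i) => h; [right|left].
  + exact: h5.
  + have hij : i != j by apply: contraNneq hne => ->.
    exact: h3.
- have := h1 z; have := h2 z; have := hp z; rewrite /Cj; lra.
- move=> [j b]; rewrite inE /= => hj; have := hmax j hj; rewrite /Cj /st /len.
  case: b => /=; first lra.
  by have := h2 j; have := hp j; lra.
Qed.


Lemma sum_D1 (A : {set 'I_n}) z (F : 'I_n -> R) : z \in A ->
  \sum_(j in A) F j = F z + \sum_(j in A :\ z) F j.
Proof.
move=> hz; rewrite (bigD1 z) //=; congr (_ + _).
by apply: eq_bigl => i; rewrite in_setD1 andbC.
Qed.

Definition LBs (A : {set 'I_n}) :=
  (\sum_(j in A) (1 + p j) + \sum_(i in A) \sum_(j in A) (1 + mnr (p i) (p j))) / 2.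

Lemma LBs_split (A : {set 'I_n}) z : z \in A ->
  LBs A = LBs (A :\ z) + (1 + p z) + \sum_(j in A :\ z) (1 + mnr (p z) (p j)).
Proof.
move=> hz.
have hD : forall F : 'I_n -> R, \sum_(j in A) F j = F z + \sum_(j in A :\ z) F j.
  move=> F; rewrite (bigD1 z) //=; congr (_ + _).
  by apply: eq_bigl => i; rewrite in_setD1 andbC.
rewrite /LBs hD hD.
have -> : \sum_(i in A :\ z) \sum_(j in A) (1 + mnr (p i) (p j)) =
   \sum_(i in A :\ z) (1 + mnr (p z) (p i)) + \sum_(i in A :\ z) \sum_(j in A :\ z) (1 + mnr (p i) (p j)).
  rewrite -big_split /=; apply: eq_bigr => i _; rewrite hD mnrC //.
rewrite hD /mnr lexx; by field.
Qed.

Lemma lb_set (A : {set 'I_n}) : LBs A <= \sum_(j in A) Cj j.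
Proof.
move: {2}#|A| (erefl #|A|) => m; elim: m A => [|m IH] A hm.
  move/eqP: hm; rewrite cards_eq0 => /eqP ->; rewrite /LBs !big_set0; lra.
have [x0 hx0] : exists x0, x0 \in A.
  apply/set0Pn; rewrite -cards_eq0 hm //.
case: (@arg_maxP _ _ 'I_n x0 (mem A) Cj hx0) => z hz hmax.
have hz' : z \in A by [].
have hcard : #|A :\ z| = m by move: hm; rewrite (cardsD1 z) hz' add1n => -[].
have hIH := IH _ hcard.
have htot := job_total hz' hmax.
rewrite (LBs_split hz') (sum_D1 _ hz').
have hm2 : \sum_(j in A :\ z) (1 + mnr (p z) (p j)) <= \sum_(j in A :\ z) (1 + p j).
  apply: ler_sum => j _; rewrite /mnr; case: (leP (p z) (p j)) => h; lra.
move: htot; rewrite (sum_D1 _ hz').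
lra.
Qed.

End LBsec.

Unset Implicit Arguments. Set Strict Implicit.

Lemma LkC (R : rcfType) (a b : R * bool) : Lk a b = Lk b a.
Proof. by rewrite /Lk mnrC. Qed.

Lemma LBt_LBs (R : rcfType) (y : R) n (p : 'I_n -> R) (sigma : {perm 'I_n}) :
  LBt (tl y (test_order p sigma)) = LBs p setT.
Proof.
rewrite /LBt (pairsE (@LkC R)) /LBs /tl /test_order.
have hm : forall F : R * bool -> R,
  \sum_(z <- [seq (v, y < v) | v <- [seq p (sigma k) | k <- enum 'I_n]]) F z =
  \sum_(j in [set: 'I_n]) F (p j, y < p j).
  move=> F; rewrite !big_map -enumT big_enum /=.
  rewrite [RHS](reindex_inj (@perm_inj _ sigma)) /=.
  by apply: eq_bigl => i; rewrite !inE.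
rewrite !hm.
have -> : \sum_(j in [set: 'I_n])
     \sum_(z <- [seq (v, y < v) | v <- [seq p (sigma k) | k <- enum 'I_n]]) Lk (p j, y < p j) z
   = \sum_(i in [set: 'I_n]) \sum_(j in [set: 'I_n]) (1 + mnr (p i) (p j)).
  by apply: eq_bigr => i _; rewrite hm.
have -> : \sum_(j in [set: 'I_n]) Lk (p j, y < p j) (p j, y < p j) =
          \sum_(j in [set: 'I_n]) (1 + p j).
  by apply: eq_bigr => j _; rewrite /Lk /mnr /= lexx.
by field.
Qed.

Theorem theorem4 (R : rcfType) (y0 : R)
  (hy0 : 1 < y0 < 2)
  (hroot : 2 * y0 ^+ 3 - 9 * y0 ^+ 2 + 10 * y0 - 2 = 0) :
  let rho := (1 - y0 + y0 ^+ 2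
              + Num.sqrt (9 - 2 * y0 - y0 ^+ 2 - 2 * y0 ^+ 3 + y0 ^+ 4)) / 2 in
  rho <= 1585%:R / 1000%:R /\
  (forall (n : nat) (p : 'I_n -> R), (forall j, 0 <= p j) ->
   forall (sigma : {perm 'I_n}) (ts ps : 'I_n -> R),
     feasible_schedule p ts ps ->
     sidle_cost y0 (test_order p sigma) <= rho * schedule_cost p ps).
Proof.
move=> rho.
have hlo := @y_lo R y0 hy0 hroot; have hhi := @y_hi R y0 hy0 hroot.
have hb : 1355 / 1000 <= y0 <= 1356 / 1000 by rewrite hlo hhi.
have [r1 r2 r3 r4 r5] := @rho_facts R y0 hb.
rewrite -/rho in r1 r2 r3 r4 r5.
have hypos : 0 < y0 by case/andP: hy0 => h _; lra.
have hr1 : 1 <= rho by lra.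
split => // n p hp sigma ts ps hf.
set s := test_order p sigma.
rewrite sidle_Aval.
have h1 := Aval_UB y0 s.
have h2 := Dv_LB rho (tl y0 s).
have h3 : 0 <= Dv rho (tl y0 s).
  rewrite -[tl y0 s]cat0s; apply: (Dv_main hypos hr1) => //.
  - apply/allP => z /mapP [v /mapP [k _ ->] ->]; rewrite /valid /=.
    by case: (leP (p (sigma k)) y0) => hv; rewrite hp //= ltW.
  - move=> r' hr'; rewrite (Dv_canon _ hypos hr'); apply: Phi_ge0 => //; try lra;
    exact: ler0n.
have h4 := @LBt_LBs R y0 n p sigma; rewrite -/s in h4.
have h5 := lb_set hp hf setT.
have h6 : \sum_(j in [set: 'I_n]) Cj p ps j = schedule_cost p ps.
  by rewrite /schedule_cost; apply: eq_bigl => i; rewrite inE.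
rewrite h6 -h4 in h5.
have h7 := ler_wpM2l (ltW (lt_le_trans ltr01 hr1)) h5.
lra.
Qed.
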